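(* Let $\mathcal A$ be an NFA and let $R$ be a strict partial order on its states with $R\subseteq\ \subseteq^{\mathrm{bw}}$. Then $P(R,\mathrm{id})$ is good for pruning on NFA: $\mathcal L(\mathrm{Prune}(\mathcal A,P(R,\mathrm{id})))=\mathcal L(\mathcal A)$. In particular this holds for $R$ the strict part of $\subseteq^{\mathrm{bw}}$.
   Context: An NFA is $\mathcal A=(\Sigma,Q,I,F,\delta)$, $\delta\subseteq Q\times\Sigma\times Q$ (assumed forward and backward complete); its language is the set of finite words having a finite trace starting in $I$ and ending in $F$. Backward finite trace inclusion: $p\subseteq^{\mathrm{bw}}q$ iff for every finite word $w$, if there is a finite $w$-trace starting in $I$ and ending in $p$, then there is a finite $w$-trace starting in $I$ and ending in $q$. Strict part: $p\subseteq q$ and not $q\subseteq p$. $\mathrm{Prune}(\mathcal A,P)$ has transition set $\{t\in\delta:\nexists t'\in\delta,(t,t')\in P\}$; $P(R_b,R_f)=\{((p,\sigma,r),(p',\sigma,r'))\in\delta\times\delta:p\,R_b\,p',\ r\,R_f\,r'\}$; $\mathrm{id}$ is the identity. *)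

(* Defs.v *)
From mathcomp Require Import all_boot.
Set Implicit Arguments. Unset Strict Implicit. Unset Printing Implicit Defensive.

Record NFA (Sigma Q : finType) := mkNFA {
  init : Q -> Prop;
  final : Q -> Prop;
  delta : Q -> Sigma -> Q -> Prop
}.

Definition transition (Sigma Q : finType) := (Q * Sigma * Q)%type.

Definition fw_complete (Sigma Q : finType) (A : NFA Sigma Q) : Prop :=
  forall (p : Q) (a : Sigma), exists r, delta A p a r.
Definition bw_complete (Sigma Q : finType) (A : NFA Sigma Q) : Prop :=
  forall (r : Q) (a : Sigma), exists p, delta A p a r.

Inductive trace (Sigma Q : finType) (A : NFA Sigma Q) : Q -> seq Sigma -> Q -> Prop :=
  | trace_nil p : trace A p [::] p
  | trace_cons p a r w q : delta A p a r -> trace A r w q -> trace A p (a :: w) q.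

Definition lang (Sigma Q : finType) (A : NFA Sigma Q) (w : seq Sigma) : Prop :=
  exists p q, init A p /\ final A q /\ trace A p w q.

Definition bw_incl (Sigma Q : finType) (A : NFA Sigma Q) (p q : Q) : Prop :=
  forall w : seq Sigma,
    (exists i, init A i /\ trace A i w p) -> (exists i, init A i /\ trace A i w q).

Definition strict_part (T : Type) (R : T -> T -> Prop) : T -> T -> Prop :=
  fun x y => R x y /\ ~ R y x.

Definition strict_partial_order (T : Type) (R : T -> T -> Prop) : Prop :=
  (forall x, ~ R x x) /\ (forall x y z, R x y -> R y z -> R x z).

Definition Prel (Sigma Q : finType) (A : NFA Sigma Q) (Rb Rf : Q -> Q -> Prop)
  : transition Sigma Q -> transition Sigma Q -> Prop :=
  fun t t' => let: (p, a, r) := t in let: (p', a', r') := t' in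
    delta A p a r /\ delta A p' a' r' /\ a = a' /\ Rb p p' /\ Rf r r'.

Definition idrel (T : Type) : T -> T -> Prop := fun x y => x = y.

Definition Prune (Sigma Q : finType) (A : NFA Sigma Q)
  (P : transition Sigma Q -> transition Sigma Q -> Prop) : NFA Sigma Q :=
  mkNFA (init A) (final A)
    (fun p a r => delta A p a r /\
       ~ (exists t' : transition Sigma Q, delta A t'.1.1 t'.1.2 t'.2 /\ P (p, a, r) t')).

(* Main.v *)
Require Import Defs.
From mathcomp Require Import all_boot.
From Stdlib Require Import Classical ClassicalEpsilon.

Section S.
Variables (Sigma Q : finType).

Definition pb (P : Prop) : bool :=
  if excluded_middle_informative P then true else false.
Lemma pbP (P : Prop) : pb P <-> P.
Proof. rewrite /pb; case: excluded_middle_informative => //; split => //. Qed.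

Lemma max_exists (R : Q -> Q -> Prop) : strict_partial_order R ->
  forall (S : Q -> Prop) x, S x -> exists y, S y /\ forall z, S z -> ~ R y z.
Proof.
move=> [Hirr Htr] S.
pose f x := #|[pred y | pb (R x y)]|.
suff H : forall n x, f x <= n -> S x -> exists y, S y /\ forall z, S z -> ~ R y z.
  by move=> x; apply: (H (f x)).
elim=> [|n IH] x Hf Sx.
- exists x; split=> // z Sz Rxz.
  have: 0 < f x.
    rewrite /f; apply/card_gt0P; exists z; rewrite inE; exact/pbP.
  by rewrite leqNgt in Hf; rewrite (negbTE Hf).
- case: (classic (exists z, S z /\ R x z)) => [[z [Sz Rxz]]|Hn].
  + apply: (IH z) => //.
    have: f z < f x.
      apply: proper_card; apply/properP; split.
        apply/subsetP=> y; rewrite !inE => /pbP Hy; apply/pbP; exact: Htr Rxz Hy.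
      exists z; rewrite !inE; first exact/pbP.
      by apply/negP=> /pbP /Hirr.
    move=> H; rewrite -ltnS; exact: leq_trans H Hf.
  + exists x; split=> // z Sz Rxz; apply: Hn; by exists z.
Qed.

Lemma trace_rcons (A : NFA Sigma Q) p u a q :
  trace A p (rcons u a) q <-> exists m, trace A p u m /\ delta A m a q.
Proof.
elim: u p => [|b u IH] p /=; split.
- move=> H; inversion H; subst. inversion H5; subst. exists p; split=> //; constructor.
- move=> [m [Hm Hd]]; inversion Hm; subst. econstructor; eauto; constructor.
- move=> H; inversion H; subst. case/IH: H5 => m [Hm Hd].
  exists m; split=> //; econstructor; eauto.
- move=> [m [Hm Hd]]; inversion Hm; subst. econstructor; eauto. apply/IH; eauto.
Qed.

Lemma trace_prune (A : NFA Sigma Q) P p w q :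
  trace (Prune A P) p w q -> trace A p w q.
Proof. elim=> [*|????? [Hd _] _ IH]; [constructor|econstructor; eauto]. Qed.

Lemma key (A : NFA Sigma Q) (R : Q -> Q -> Prop) : strict_partial_order R ->
  (forall p q, R p q -> bw_incl A p q) ->
  forall w q, (exists i, init A i /\ trace A i w q) ->
    exists i, init A i /\ trace (Prune A (Prel A R (@idrel Q))) i w q.
Proof.
move=> HR Hinc; elim/last_ind=> [|u a IH] q [i [Hi Ht]].
- inversion Ht; subst; exists q; split=> //; constructor.
- case/trace_rcons: Ht => m [Hm Hd].
  pose S p := (exists i, init A i /\ trace A i u p) /\ delta A p a q.
  have Sm : S m by split=> //; exists i.
  case: (@max_exists R HR S m Sm) => p' [[Hr Hd'] Hmax].
  case: (IH p' Hr) => j [Hj Htj].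
  exists j; split=> //; apply/trace_rcons; exists p'; split=> //; split=> //.
  move=> [[[p'' a''] r''] /= [Hd'' Hp]].
  case: Hp => _ [_ [Ea [Rp Er]]]; rewrite /idrel in Er; subst r'' a''.
  apply: (Hmax p'' _ Rp); split=> //; exact: (Hinc _ _ Rp _ Hr).
Qed.

Lemma main (A : NFA Sigma Q) (R : Q -> Q -> Prop) : strict_partial_order R ->
  (forall p q, R p q -> bw_incl A p q) ->
  forall w, lang (Prune A (Prel A R (@idrel Q))) w <-> lang A w.
Proof.
move=> HR Hinc w; split.
- move=> [p [q [Hp [Hq Ht]]]]; exists p, q; split=> //; split=> //; exact: trace_prune Ht.
- move=> [p [q [Hp [Hq Ht]]]].
  case: (@key A R HR Hinc w q (ex_intro _ p (conj Hp Ht))) => i [Hi Hti].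
  by exists i, q.
Qed.

End S.

Theorem theorem5p7 (Sigma Q : finType) (A : NFA Sigma Q)
  (Hfw : fw_complete A) (Hbw : bw_complete A) :
  (forall R : Q -> Q -> Prop,
     strict_partial_order R ->
     (forall p q, R p q -> bw_incl A p q) ->
     forall w : seq Sigma, lang (Prune A (Prel A R (@idrel Q))) w <-> lang A w)
  /\
  (forall w : seq Sigma,
     lang (Prune A (Prel A (strict_part (bw_incl A)) (@idrel Q))) w <-> lang A w).
Proof.
split; first exact: main.
apply: main.
- split.
  + by move=> x [_ H]; apply: H => w.
  + move=> x y z [Hxy Nyx] [Hyz Nzy]; split.
    * by move=> w /Hxy /Hyz.
    * by move=> Hzx; apply: Nyx => w /Hyz /Hzx.
- by move=> p q [].
Qed.
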